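(* Let $G=(V,E)$ be a finite, simple, connected graph which is reflective and locally connected. Then $G$ is distance transitive.
   Context: $d$ is the combinatorial distance. Locally connected: for every vertex $v$ the subgraph induced on the neighbors of $v$ is connected. Distance transitive: for all $x,y,x',y'\in V$ with $d(x,y)=d(x',y')$ there is a graph automorphism $\psi$ with $\psi(x)=x'$ and $\psi(y)=y'$. For adjacent $x\sim y$ let $V_x^y=\{v: d(v,x)<d(v,y)\}$, $V^{xy}=\{v:d(v,x)=d(v,y)\}$. A reflection from $x$ to $y$ is a graph automorphism $\phi$ with $\phi\circ\phi=\mathrm{id}$, $\phi(x)=y$, such that the edges between $V_x^y$ and $V_y^x$ are exactly $\{\{x',\phi(x')\}:x'\in V_x^y\}$ and $\phi$ fixes $V^{xy}$ pointwise. A graph is reflective if every edge admits a reflection. *)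

(* Defs.v *)
From mathcomp Require Import all_boot.
Set Implicit Arguments. Unset Strict Implicit. Unset Printing Implicit Defensive.

Section Graph.
Variables (T : finType) (e : rel T).

Definition has_walk (n : nat) (x y : T) : bool :=
  [exists p : n.-tuple T, path e x p && (last x p == y)].

(* combinatorial distance: least n with a walk of length n from x to y;
   (shortest paths have length < #|T|; value #|T| only if no path exists) *)
Definition dist (x y : T) : nat :=
  find (fun n => has_walk n x y) (iota 0 #|T|).

Definition simple_graph : Prop := symmetric e /\ irreflexive e.

Definition connected_graph : Prop := forall x y : T, connect e x y.

Definition nbhd_rel (v : T) : rel T := [rel a b | [&& e v a, e v b & e a b]].

Definition locally_connected : Prop :=
  forall v a b : T, e v a -> e v b -> connect (nbhd_rel v) a b.

Definition graph_automorphism (f : T -> T) : Prop :=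
  bijective f /\ forall a b : T, e (f a) (f b) = e a b.

Definition distance_transitive : Prop :=
  forall x y x' y' : T, dist x y = dist x' y' ->
    exists psi : T -> T, graph_automorphism psi /\ psi x = x' /\ psi y = y'.

Definition Vside (x y : T) : {set T} := [set v | dist v x < dist v y].
Definition Vmid (x y : T) : {set T} := [set v | dist v x == dist v y].

Definition reflection (x y : T) (phi : T -> T) : Prop :=
  graph_automorphism phi /\
  (forall v, phi (phi v) = v) /\
  phi x = y /\
      (forall a, a \in Vside x y -> phi a \in Vside y x /\ e a (phi a)) /\
      (forall a b, a \in Vside x y -> b \in Vside y x -> e a b -> b = phi a) /\
  (forall v, v \in Vmid x y -> phi v = v).

Definition reflective : Prop :=
  forall x y : T, e x y -> exists phi : T -> T, reflection x y phi.

End Graph.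

(* Main.v *)
Require Import Defs.
From mathcomp Require Import all_boot.
From mathcomp Require Import zify.
Set Implicit Arguments. Unset Strict Implicit. Unset Printing Implicit Defensive.

Section Aux.
Variables (T : finType) (e : rel T).
Hypothesis esym : symmetric e.
Hypothesis eirr : irreflexive e.
Hypothesis econ : connected_graph e.

Local Notation d := (dist e).

Lemma has_walkP n x y :
  reflect (exists p : seq T, [/\ size p = n, path e x p & last x p = y])
          (has_walk e n x y).
Proof.
apply: (iffP existsP) => [[p /andP[Hp /eqP Hl]] | [p [Hs Hp Hl]]].
  by exists (val p); rewrite size_tuple.
have Hs' : size p == n by apply/eqP.
by exists (Tuple Hs') => /=; rewrite Hp Hl eqxx.
Qed.

Lemma dist_le n x y : has_walk e n x y -> d x y <= n.
Proof.
move=> H; rewrite /dist.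
case: (leqP #|T| n) => Hn.
  by apply: leq_trans (find_size _ _) _; rewrite size_iota.
rewrite leqNgt; apply/negP => Hlt.
have := before_find 0 Hlt.
by rewrite nth_iota // add0n H.
Qed.

Lemma walk_exists x y : exists n, (n < #|T|) && has_walk e n x y.
Proof.
have /connectP[p Hp Hl] := econ x y.
rewrite Hl; case: (shortenP Hp) => p' Hp' Hu _.
exists (size p'); apply/andP; split.
  have := max_card (mem (x :: p')).
  by rewrite (card_uniqP Hu).
by apply/has_walkP; exists p'.
Qed.

Lemma dist_walk x y : has_walk e (d x y) x y.
Proof.
have [n /andP[Hn H]] := walk_exists x y.
have Hh : has (fun n => has_walk e n x y) (iota 0 #|T|).
  by apply/hasP; exists n => //; rewrite mem_iota.
have := nth_find 0 Hh.
have := Hh; rewrite has_find size_iota => Hf.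
by rewrite nth_iota // add0n.
Qed.

Lemma dist_step a b c : e b c -> d a c <= (d a b).+1.
Proof.
move=> Hbc; have /has_walkP[p [Hs Hp Hl]] := dist_walk a b.
apply: dist_le; apply/has_walkP; exists (rcons p c).
by rewrite size_rcons Hs rcons_path Hp Hl Hbc last_rcons.
Qed.

Lemma dist_refl x : d x x = 0.
Proof.
apply/eqP; rewrite -leqn0; apply: dist_le; apply/has_walkP; by exists [::].
Qed.

Lemma dist0 x y : d x y = 0 -> x = y.
Proof.
move=> H; have := dist_walk x y; rewrite H => /has_walkP[p [Hs _ Hl]].
by case: p Hs Hl.
Qed.

Lemma dist1 x y : d x y = 1 -> e x y.
Proof.
move=> H; have := dist_walk x y; rewrite H => /has_walkP[p [Hs Hp Hl]].
case: p Hs Hp Hl => [|c [|]] //= _; rewrite andbT => ? <-; done.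
Qed.

Lemma dist_adj x y : e x y -> d x y = 1.
Proof.
move=> H.
have H1 : d x y <= 1.
  apply: dist_le; apply/has_walkP; exists [:: y]; by rewrite /= H.
case: (d x y =P 0) => [/dist0 E|]; last by lia.
by move: H; rewrite E eirr.
Qed.

Lemma dist_sym_le x y : d y x <= d x y.
Proof.
have /has_walkP[p [Hs Hp Hl]] := dist_walk x y.
rewrite -Hs -Hl; elim: p x Hp {Hs Hl} => [|c p IH] x /=.
  by rewrite dist_refl.
move=> /andP[Hxc Hp].
apply: leq_trans (dist_step _ _) _; first by rewrite esym; exact: Hxc.
by rewrite ltnS; apply: IH.
Qed.

Lemma dist_sym x y : d x y = d y x.
Proof. by apply/eqP; rewrite eqn_leq !dist_sym_le. Qed.

Lemma dist_pred x y n : d x y = n.+1 -> exists z, e z y /\ d x z = n.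
Proof.
move=> H; have := dist_walk x y; rewrite H => /has_walkP[p [Hs Hp Hl]].
case/lastP: p Hs Hp Hl => [|p c] //.
rewrite size_rcons rcons_path last_rcons => /eqP; rewrite eqSS => /eqP Hs /andP[Hp Hc] Hcy.
exists (last x p); split; first by rewrite -Hcy.
have H1 : d x (last x p) <= n by apply: dist_le; apply/has_walkP; exists p.
have H2 := dist_step x Hc.
rewrite Hcy H in H2; lia.
Qed.

Lemma path_map2 (r r' : rel T) (h : T -> T) :
  (forall a b, r a b -> r' (h a) (h b)) ->
  forall p x, path r x p -> path r' (h x) (map h p).
Proof.
move=> Hh; elim=> [|c p IH] x //= /andP[H1 H2].
by rewrite Hh // IH.
Qed.

Lemma walk_map h n x y : (forall a b, e a b -> e (h a) (h b)) ->
  has_walk e n x y -> has_walk e n (h x) (h y).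
Proof.
move=> Hh /has_walkP[p [Hs Hp Hl]]; apply/has_walkP; exists (map h p).
by rewrite size_map Hs last_map Hl (path_map2 Hh).
Qed.

Lemma aut_dist h x y : graph_automorphism e h -> d (h x) (h y) = d x y.
Proof.
case=> [[g hg gh] Hh]; rewrite /dist; apply: eq_find => n.
apply/idP/idP => H.
  have := walk_map (h := g) _ H; rewrite !hg; apply.
  by move=> a b; rewrite -[e (g a) (g b)]Hh !gh.
by apply: walk_map H => a b; rewrite Hh.
Qed.

Lemma aut_id : graph_automorphism e id.
Proof. by split => //; exists id. Qed.

Lemma aut_comp f g : graph_automorphism e f -> graph_automorphism e g ->
  graph_automorphism e (f \o g).
Proof.
case=> Hf Hf' [Hg Hg']; split; first exact: bij_comp.
by move=> a b /=; rewrite Hf' Hg'.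
Qed.


Opaque dist.

Lemma refl_fix phi a b v : reflection e a b phi -> d v a = d v b -> phi v = v.
Proof.
case=> _ [_ [_ [_ [_ Hm]]]] H; apply: Hm; by rewrite /Vmid inE H.
Qed.

Lemma lazy_le y : forall s z, path (fun a b => (a == b) || e a b) z s ->
  d y (last z s) <= d y z + size s.
Proof.
elim=> [|c s IH] z /=; first by rewrite addn0.
move=> /andP[Hzc Hp]; apply: leq_trans (IH _ Hp) _.
have Hc : d y c <= (d y z).+1.
  case/orP: Hzc => [/eqP <-|Hzc]; first by apply: leqnSn.
  exact: dist_step.
by rewrite addnS -addSn leq_add2r.
Qed.

Lemma fold_le phi w p y z : reflection e w p phi ->
  y \in Vside e w p -> z \in Vside e w p -> d y z <= d y (phi z).
Proof.
move=> Hr; have [[Haut Haut'] [Hinv [Hwp [Hside [Hedge Hmid]]]]] := Hr.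
move=> Hy Hz.
pose f v := if v \in Vside e p w then phi v else v.
have Hf : forall v v', e v v' -> (f v == f v') || e (f v) (f v').
  move=> v v' Hvv'; rewrite /f.
  case: ifP => Hv; case: ifP => Hv'.
  - by rewrite Haut' Hvv' orbT.
  - move: (Hv) (Hv'); rewrite !inE => Hv1 Hv1'.
    case: (ltngtP (d v' w) (d v' p)) => Hc.
    + have Hs' : v' \in Vside e w p by rewrite inE.
      rewrite (Hedge v' v Hs' Hv) ?Hinv ?eqxx //; by rewrite esym.
    + by rewrite Hc in Hv1'.
    + have Hm : v' \in Vmid e w p by rewrite inE Hc.
      by rewrite -{2}(Hmid _ Hm) Haut' Hvv' orbT.
  - move: (Hv) (Hv'); rewrite !inE => Hv1 Hv1'.
    case: (ltngtP (d v w) (d v p)) => Hc.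
    + have Hs' : v \in Vside e w p by rewrite inE.
      by rewrite (Hedge v v' Hs' Hv') // Hinv eqxx.
    + by rewrite Hc in Hv1.
    + have Hm : v \in Vmid e w p by rewrite inE Hc.
      by rewrite -{2}(Hmid _ Hm) Haut' Hvv' orbT.
  - by rewrite Hvv' orbT.
have /has_walkP[s [Hs Hp Hl]] := dist_walk y (phi z).
have := lazy_le y (path_map2 Hf Hp).
have Hfy : f y = y.
  rewrite /f; case: ifP => // Hc; move: Hy Hc; rewrite !inE => H1 H2; have := ltn_trans H1 H2; by rewrite ltnn.
have Hfz : f (phi z) = z.
  by rewrite /f (proj1 (Hside _ Hz)) Hinv.
by rewrite last_map Hl Hfz Hfy dist_refl size_map Hs.
Qed.

Lemma split_lemma (lv : T -> nat) a w s :
  path (fun v v' => (lv v' <= (lv v).+1) && (lv v <= (lv v').+1)) w s ->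
  (lv w).+1 = lv a -> lv w < lv (last w s) ->
  exists s1 w' q s2, [/\ w :: s = s1 ++ w' :: q :: s2,
     lv (last a s1) = (lv w').+1 & (lv q = lv w' \/ lv q = (lv w').+1)].
Proof.
elim: s a w => [|q s IH] a w /=; first by rewrite ltnn.
move=> /andP[/andP[H1 H2] Hp] Ha Hl.
case: (leqP (lv w) (lv q)) => Hc.
  exists [::], w, q, s; split => //=; lia.
have [s1 [w' [q' [s2 [E1 E2 E3]]]]] := IH w q Hp ltac:(lia) ltac:(lia).
by exists (w :: s1), w', q', s2; rewrite /= E1.
Qed.

Definition mu K x s := sumn (map (fun w => (K - d x w).+1) s).

Lemma mu_cat K x s1 s2 : mu K x (s1 ++ s2) = mu K x s1 + mu K x s2.
Proof. by rewrite /mu map_cat sumn_cat. Qed.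

Lemma mu_map K x h s : (forall v, d x (h v) = d x v) -> mu K x (map h s) = mu K x s.
Proof. by move=> H; rewrite /mu -map_comp; congr sumn; apply: eq_map => v /=; rewrite H. Qed.

Lemma mu_cons K x w s : mu K x (w :: s) = (K - d x w).+1 + mu K x s.
Proof. by []. Qed.

Lemma nbhd_map phi u a b : graph_automorphism e phi -> phi u = u ->
  nbhd_rel e u a b -> nbhd_rel e u (phi a) (phi b).
Proof.
case=> _ Ha Hu H; rewrite /nbhd_rel /= -{1 2}Hu !Ha; exact: H.
Qed.

Hypothesis Hr : reflective e.

Lemma core x u K : K = (d x u).+1 ->
  forall n s a, mu K x s <= n -> path (nbhd_rel e u) a s -> d x a = K ->
  d x (last a s) = K ->
  exists h, [/\ graph_automorphism e h, h x = x & h a = last a s].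
Proof.
move=> HK; elim=> [|n IH] s a.
  case: s => [|w s]; last by rewrite mu_cons.
  by move=> *; exists id; split => //; exact: aut_id.
case: s => [|w1 s'] Hmu Hp0 Ha Hb.
  by exists id; split => //; exact: aut_id.
move: (Hp0) => /= /andP[/and3P[Hua Huw1 Haw1] Hp].
have Hw1K : d x w1 <= K by rewrite HK; exact: dist_step.
have Hw1K' : d x a <= (d x w1).+1 by apply: dist_step; rewrite esym.
have [Hw1|Hw1] : d x w1 = K \/ (d x w1).+1 = d x a by lia.
- have [phi Hphi] := Hr Haw1.
  have [Hpaut [Hinv [Hpa _]]] := Hphi.
  have Hpx : phi x = x by apply: (refl_fix Hphi); rewrite Ha Hw1.
  have Hmu' : mu K x s' <= n by move: Hmu; rewrite mu_cons; lia.
  have [h [Hh Hhx Hhw]] := IH s' w1 Hmu' Hp Hw1 Hb.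
  exists (h \o phi); split; [exact: aut_comp | by rewrite /= Hpx | by rewrite /= Hpa].
have Hsub : path (fun v v' => (d x v' <= (d x v).+1) && (d x v <= (d x v').+1)) w1 s'.
  apply: sub_path Hp => v v' /and3P[_ _ Hvv']; apply/andP; split.
    exact: dist_step.
  by apply: dist_step; rewrite esym.
have Hlt : d x w1 < d x (last w1 s') by move: Hb => /= ->; lia.
have [s1 [w [q [s2 [Eq Hpl Hq]]]]] := split_lemma Hsub Hw1 Hlt.
change (last w1 s') with (last a (w1 :: s')).
rewrite Eq in Hp0 Hmu Hb *.
rewrite last_cat /= in Hb *.
have [p Hpdef] : exists p, last a s1 = p by eexists.
rewrite Hpdef in Hpl.
move: Hp0; rewrite cat_path Hpdef /= => /andP[Hps1 /and3P[Hpw Hwq Hqs2]].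
move: (Hpw) (Hwq) => /and3P[Hup Huw Hepw] /and3P[_ Huq Hewq].
have Hmu2 : mu K x s1 + (K - d x w).+1 + (K - d x q).+1 + mu K x s2 <= n.+1.
  by move: Hmu; rewrite mu_cat !mu_cons !addnA.
have HpK : d x p <= K by rewrite HK; exact: dist_step.
case: Hq => Hq.
- have Heqw : e q w by rewrite esym.
  have [phi Hphi] := Hr Heqw.
  have [Hpaut [Hinv [Hpq _]]] := Hphi.
  have Hpx : phi x = x by apply: (refl_fix Hphi); rewrite Hq.
  have Hpu : phi u = u by apply: (refl_fix Hphi); rewrite !dist_adj.
  have Hlv : forall v, d x (phi v) = d x v by move=> v; rewrite -{1}Hpx aut_dist.
  have Hpath : path (nbhd_rel e u) a (s1 ++ w :: map phi s2).
    rewrite cat_path Hps1 Hpdef /= Hpw /= -{1}Hpq.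
    by apply: path_map2 Hqs2 => v v'; apply: nbhd_map.
  have Hmu3 : mu K x (s1 ++ w :: map phi s2) <= n.
    by rewrite mu_cat mu_cons (mu_map _ _ Hlv); clear -Hmu2; lia.
  have Hlast : d x (last a (s1 ++ w :: map phi s2)) = K.
    by rewrite last_cat /= -{1}Hpq last_map Hlv.
  have [h [Hh Hhx Hha]] := IH _ _ Hmu3 Hpath Ha Hlast.
  exists (phi \o h); split; first exact: aut_comp.
    by rewrite /= Hhx.
  by rewrite /= Hha last_cat /= -{1}Hpq last_map Hinv.
case: (eqVneq p q) => [Epq|Npq].
  have Hpath : path (nbhd_rel e u) a (s1 ++ s2) by rewrite cat_path Hps1 Hpdef Epq.
  have Hmu3 : mu K x (s1 ++ s2) <= n by rewrite mu_cat; clear -Hmu2; lia.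
  have Hlast : d x (last a (s1 ++ s2)) = K by rewrite last_cat Hpdef Epq.
  have [h [Hh Hhx Hha]] := IH _ _ Hmu3 Hpath Ha Hlast.
  by exists h; split => //; rewrite Hha last_cat Hpdef Epq.
case: (boolP (e p q)) => Hepq.
  have Hpath : path (nbhd_rel e u) a (s1 ++ q :: s2).
    by rewrite cat_path Hps1 Hpdef /= Hqs2 /nbhd_rel /= Hup Huq Hepq.
  have Hmu3 : mu K x (s1 ++ q :: s2) <= n by rewrite mu_cat mu_cons; clear -Hmu2; lia.
  have Hlast : d x (last a (s1 ++ q :: s2)) = K by rewrite last_cat.
  have [h [Hh Hhx Hha]] := IH _ _ Hmu3 Hpath Ha Hlast.
  by exists h; split => //; rewrite Hha last_cat.
have Hewp : e w p by rewrite esym.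
have [phi Hphi] := Hr Hewp.
have [[Hpb Hpaut] [Hinv [Hpw' [Hside _]]]] := Hphi.
have Hqside : q \in Vside e w p.
  rewrite inE (dist_adj (_ : e q w)); last by rewrite esym.
  case: (ltngtP 1 (d q p)) => // Hc.
    have Hq0 : d q p = 0 by clear -Hc; lia.
    by move: Npq; rewrite (dist0 Hq0) eqxx.
  by move: Hepq; rewrite esym (dist1 (Logic.eq_sym Hc)).
have Hxside : x \in Vside e w p by rewrite inE Hpl.
have Hfold := fold_le Hphi Hxside Hqside.
have Hpu : phi u = u by apply: (refl_fix Hphi); rewrite !dist_adj.
have Hux : e u (phi q) by rewrite -{1}Hpu Hpaut.
have Hpx' : e p (phi q) by rewrite -Hpw' Hpaut.
have Hxq : e (phi q) q by rewrite esym; exact: (proj2 (Hside _ Hqside)).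
have Hpath : path (nbhd_rel e u) a (s1 ++ phi q :: q :: s2).
  by rewrite cat_path Hps1 Hpdef /= Hqs2 /nbhd_rel /= Hup Hux Hpx' Huq Hxq.
have Hmu3 : mu K x (s1 ++ phi q :: q :: s2) <= n.
  rewrite mu_cat !mu_cons; clear -Hmu2 Hfold Hq Hpl HpK; lia.
have Hlast : d x (last a (s1 ++ phi q :: q :: s2)) = K by rewrite last_cat.
have [h [Hh Hhx Hha]] := IH _ _ Hmu3 Hpath Ha Hlast.
by exists h; split => //; rewrite Hha last_cat.
Qed.

Lemma vtrans a b : exists h, graph_automorphism e h /\ h a = b.
Proof.
have /connectP[p Hp ->] := econ a b.
elim: p a Hp => [|c p IH] a /=.
  by move=> _; exists id; split => //; exact: aut_id.
move=> /andP[Hac Hp].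
have [phi Hphi] := Hr Hac.
have [Hpaut [_ [Hpa _]]] := Hphi.
have [h [Hh Hhc]] := IH c Hp.
by exists (h \o phi); split; [exact: aut_comp | rewrite /= Hpa].
Qed.

Hypothesis Hlc : locally_connected e.

Lemma stab k : forall x y y', d x y = k -> d x y' = k ->
  exists h, [/\ graph_automorphism e h, h x = x & h y = y'].
Proof.
elim: k => [|k IH] x y y' Hy Hy'.
  rewrite -(dist0 Hy) -(dist0 Hy').
  by exists id; split => //; exact: aut_id.
have [p [Hpy Hp]] := dist_pred Hy.
have [p' [Hpy' Hp']] := dist_pred Hy'.
have [h1 [Hh1 Hh1x Hh1p]] := IH x p p' Hp Hp'.
have Hea : e p' (h1 y) by rewrite -Hh1p (proj2 Hh1).
have Hda : d x (h1 y) = k.+1 by rewrite -{1}Hh1x aut_dist.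
have /connectP[s Hs Hl] := Hlc Hea Hpy'.
have HK : k.+1 = (d x p').+1 by rewrite Hp'.
have Hlast : d x (last (h1 y) s) = k.+1 by rewrite -Hl.
have [h2 [Hh2 Hh2x Hh2a]] := core HK (leqnn _) Hs Hda Hlast.
exists (h2 \o h1); split; first exact: aut_comp.
  by rewrite /= Hh1x.
by rewrite /= Hh2a -Hl.
Qed.

End Aux.

Theorem lemma2p12 (T : finType) (e : rel T) :
  simple_graph e -> connected_graph e -> reflective e -> locally_connected e ->
  distance_transitive e.
Proof.
move=> [Hs Hi] Hc Hr Hlc x y x' y' Hd.
have [g [Hg Hgx]] := vtrans Hc Hr x x'.
have Hd' : dist e x' (g y) = dist e x' y' by rewrite -{1}Hgx (aut_dist _ _ Hg).
have [h [Hh Hhx Hhy]] := stab Hs Hi Hc Hr Hlc Hd' (erefl _).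
exists (h \o g); split; first exact: aut_comp.
by rewrite /= Hgx Hhx Hhy.
Qed.
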